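(* Let $\mathbb{K}$ be a field with $|\mathbb{K}|>2$ and let $(X,Z,\Xi,\Theta)$ be a dual split pre-Veronese set. The following are equivalent: (i) $\Theta=\emptyset$; (ii) for every $\xi\in\Xi$, the vertex $Y\cap\xi$ of $(X\cup Y)\cap\xi$ equals $Y$; (iii) there exists $\xi\in\Xi$ whose vertex $Y\cap\xi$ equals $Y$.
   Context: Let $\mathbb{K}$ be a field. For integers $R\ge1$, $V\ge -1$, an $(R,V)$-cone is a cone with a $V$-dimensional vertex (empty if $V=-1$) over a non-degenerate hyperbolic quadric in $\mathbb{P}^{2R+1}(\mathbb{K})$; the $(R,V)$-tube is the cone minus its vertex. Let $r,v,r',v'\ge -1$ be integers with $r'>r\ge1$, $d=2r+v+1$, $d'=2r'+v'+1$. Let $X,Z$ be point sets with $X\cup Z$ spanning $\mathbb{P}^N(\mathbb{K})$, $Y:=\langle Z\rangle$; $\Xi$ a family of $(d+1)$-dimensional subspaces with $|\Xi|>1$, $\Theta$ a possibly empty family of $(d'+1)$-dimensional subspaces such that: for $\xi\in\Xi$, $(X\cup Y)\cap\xi$ is an $(r,v)$-cone with vertex $Y\cap\xi$ and $X\cap\xi$ is its tube; for $\theta\in\Theta$, $(X\cup Y)\cap\theta$ is an $(r',v')$-cone $C_\theta$, $Y\cap\theta$ is a generator $M$ of $C_\theta$, $Z\cap\theta$ is the disjoint union of the vertex $V_\theta$ and an $r'$-space of $M$ complementary to $V_\theta$, and $X\cap\theta=C_\theta\setminus M$. A subspace is singular if all its points lie in $X\cup Y$; two points are collinear if the joining line is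 singular. Axioms: (S1) any two distinct points of $X\cup Z$ lie in a common member of $\Xi\cup\Theta$; (S2) the intersection of two distinct members of $\Xi\cup\Theta$ is singular. A dual split pre-Veronese set (pre-DSV) is such a quadruple satisfying (S1) and (S2). *)

(* Defs.v *)
(* Projective space P^N(K) is modelled on the row vectors
   'rV[K]_n with n = N+1: a projective point is represented by any nonzero
   vector, a (projective) subspace by a square matrix through its row space
   (mxalgebra), so "x lies in S" is (x <= S)%MS and projective dimension is
   \rank S - 1.  Point sets are predicates on vectors closed under nonzero
   scaling and not containing 0. *)
From mathcomp Require Import all_boot all_order all_algebra.
Set Implicit Arguments. Unset Strict Implicit. Unset Printing Implicit Defensive.
Import GRing.Theory.
Local Open Scope ring_scope.

Section Defs.
Variables (K : fieldType) (n : nat).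

Definition is_pointset (P : 'rV[K]_n -> Prop) : Prop :=
  (forall x, P x -> x != 0) /\
  (forall x c, P x -> c != 0 -> P (c *: x)).

Definition pts (S : 'M[K]_n) : 'rV[K]_n -> Prop :=
  fun x => x != 0 /\ (x <= S)%MS.

Definition is_span (Z : 'rV[K]_n -> Prop) (Y : 'M[K]_n) : Prop :=
  (forall z, Z z -> (z <= Y)%MS) /\
  (forall S : 'M[K]_n, (forall z, Z z -> (z <= S)%MS) -> (Y <= S)%MS).

Definition spans_all (P : 'rV[K]_n -> Prop) : Prop :=
  forall S : 'M[K]_n, (forall z, P z -> (z <= S)%MS) -> (1%:M <= S)%MS.

(* Standard hyperbolic quadratic form x0 x1 + x2 x3 + ... + x_{2R} x_{2R+1}
   on K^{2R+2}: its zero set is the non-degenerate hyperbolic quadric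
   of P^{2R+1}(K) (up to projectivity). *)
Definition hypq (R : nat) (a : 'rV[K]_(R.*2.+2)) : K :=
  \sum_(i < R.+1) a 0 (inord i.*2) * a 0 (inord i.*2.+1).

(* C is an (R,V)-cone spanning the subspace S, with vertex (the subspace) Vx,
   where Vn = V+1 is the vector dimension of the vertex (Vn = 0 <-> V = -1,
   empty vertex). *)
Definition is_cone (R Vn : nat) (S : 'M[K]_n) (C : 'rV[K]_n -> Prop)
    (Vx : 'M[K]_n) : Prop :=
  exists (E : 'M[K]_(R.*2.+2, n)) (F : 'M[K]_(Vn, n)),
    [/\ row_free (col_mx E F), (col_mx E F == S)%MS, (F == Vx)%MS &
     forall x, C x <->
       (x != 0 /\ exists a b, x = a *m E + b *m F /\ hypq a = 0)].

Definition is_generator (C : 'rV[K]_n -> Prop) (M : 'M[K]_n) : Prop :=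
  (forall x, pts M x -> C x) /\
  (forall M' : 'M[K]_n, (M <= M')%MS -> (forall x, pts M' x -> C x) ->
     (M' <= M)%MS).

Definition singular (X : 'rV[K]_n -> Prop) (Y S : 'M[K]_n) : Prop :=
  forall x, pts S x -> X x \/ (x <= Y)%MS.

Definition XYcap (X : 'rV[K]_n -> Prop) (Y S : 'M[K]_n) : 'rV[K]_n -> Prop :=
  fun x => (X x \/ pts Y x) /\ (x <= S)%MS.

(* Dual split pre-Veronese set (X, Z, Xi, Theta) with parameters
   r, v, r', v' where vn = v+1 and vn' = v'+1 (so v, v' >= -1 correspond to
   vn, vn' : nat), and Y = <Z>. *)
Definition is_preDSV (r vn r' vn' : nat) (X Z : 'rV[K]_n -> Prop) (Y : 'M[K]_n)
    (Xi Theta : 'M[K]_n -> Prop) : Prop :=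
  (1 <= r)%N /\ (r < r')%N /\ is_pointset X /\ is_pointset Z /\ is_span Z Y /\
   spans_all (fun x => X x \/ Z x) /\
   (exists xi1 xi2, [/\ Xi xi1, Xi xi2 & ~~ (xi1 == xi2)%MS]) /\
   (forall xi, Xi xi ->
      [/\ \rank xi = (r.*2.+2 + vn)%N,
          is_cone r vn xi (XYcap X Y xi) (Y :&: xi)%MS &
          forall x, (X x /\ (x <= xi)%MS) <->
                    (XYcap X Y xi x /\ ~~ (x <= Y :&: xi)%MS)]) /\
   (forall th, Theta th ->
      \rank th = (r'.*2.+2 + vn')%N /\
      exists Vth : 'M[K]_n,
        [/\ is_cone r' vn' th (XYcap X Y th) Vth,
            is_generator (XYcap X Y th) (Y :&: th)%MS,
            (exists W : 'M[K]_n,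
               [/\ \rank W = r'.+1, (W <= Y :&: th)%MS,
                   \rank (W :&: Vth)%MS = 0%N, (W + Vth == Y :&: th)%MS &
                   forall x, (Z x /\ (x <= th)%MS) <-> (pts Vth x \/ pts W x)]) &
            forall x, (X x /\ (x <= th)%MS) <->
                      (XYcap X Y th x /\ ~~ (x <= Y :&: th)%MS)]) /\
   (forall x y, (X x \/ Z x) -> (X y \/ Z y) -> ~~ (x == y)%MS ->
      exists S, (Xi S \/ Theta S) /\ (x <= S)%MS /\ (y <= S)%MS) /\
   (forall S1 S2, (Xi S1 \/ Theta S1) -> (Xi S2 \/ Theta S2) ->
      ~~ (S1 == S2)%MS -> singular X Y (S1 :&: S2)%MS).

End Defs.

(* Main.v *)
Require Import Defs.
From mathcomp Require Import all_boot all_order all_algebra zify.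
Set Implicit Arguments. Unset Strict Implicit. Unset Printing Implicit Defensive.
Import GRing.Theory.
Local Open Scope ring_scope.

Section Helpers.
Variable K : fieldType.

Definition ek (R k : nat) : 'rV[K]_(R.*2.+2) := \row_(j < R.*2.+2) ((j : nat) == k)%:R.

Lemma ek_hyp0 R c : hypq (c *: ek R 0) = 0.
Proof.
apply: big1 => i _; rewrite !mxE (inordK (m := i.*2.+1)); last by have := ltn_ord i; lia.
by rewrite /= !mulr0.
Qed.

Lemma ek_hyp0' R : hypq (ek R 0) = 0.
Proof. by rewrite -[ek R 0]scale1r ek_hyp0. Qed.

Lemma ek_hyp1 R : hypq (ek R 1) = 0.
Proof.
apply: big1 => i _; rewrite !mxE (inordK (m := i.*2)); last by have := ltn_ord i; lia.
have -> : (i.*2 == 1)%N = false by lia.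
by rewrite mul0r.
Qed.

Lemma ek_hyp01 R : hypq (ek R 0 + ek R 1) = 1.
Proof.
rewrite /hypq big_ord_recl big1 ?addr0.
  rewrite !mxE /= double0 !inordK //=.
  by rewrite addr0 add0r mulr1.
move=> i _; rewrite !mxE /= !inordK /= ?addr0 ?mul0r //;
  have := ltn_ord i; rewrite /bump /=; lia.
Qed.

Lemma ek_neq0 R k : (k < R.*2.+2)%N -> ek R k != 0.
Proof.
move=> hk; apply/eqP => /matrixP /(_ 0 (Ordinal hk)); rewrite !mxE eqxx /=.
by move/eqP; rewrite oner_eq0.
Qed.

Lemma ek01_neq0 R : ek R 0 + ek R 1 != 0.
Proof.
apply/eqP => /matrixP /(_ 0 ord0); rewrite !mxE /= addr0.
by move/eqP; rewrite oner_eq0.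
Qed.

Variable n : nat.

Lemma rf_uniq m1 m2 (E : 'M[K]_(m1, n)) (F : 'M_(m2, n)) (a a' : 'rV_m1) (b b' : 'rV_m2) :
  row_free (col_mx E F) -> a *m E + b *m F = a' *m E + b' *m F -> a = a' /\ b = b'.
Proof.
move=> rf h; have inj := row_free_inj rf.
have : row_mx a b = row_mx a' b' by apply: inj; rewrite /= !mul_row_col.
by move/eq_row_mx.
Qed.

Lemma rf_neq0 m1 m2 (E : 'M[K]_(m1, n)) (F : 'M_(m2, n)) (a : 'rV_m1) (b : 'rV_m2) :
  row_free (col_mx E F) -> a != 0 -> a *m E + b *m F != 0.
Proof.
move=> rf ha; apply/eqP => h.
have h' : a *m E + b *m F = 0 *m E + (0 : 'rV_m2) *m F by rewrite h !mul0mx addr0.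
have [ea _] := rf_uniq rf h'.
by rewrite ea eqxx in ha.
Qed.

Lemma rf_neq0' m1 m2 (E : 'M[K]_(m1, n)) (F : 'M_(m2, n)) (a : 'rV_m1) :
  row_free (col_mx E F) -> a != 0 -> a *m E != 0.
Proof.
move=> rf ha; have := rf_neq0 (0 : 'rV_m2) rf ha; by rewrite mul0mx addr0.
Qed.

Lemma rf_notF m1 m2 (E : 'M[K]_(m1, n)) (F : 'M_(m2, n)) (a : 'rV_m1) :
  row_free (col_mx E F) -> a != 0 -> ~~ (a *m E <= F)%MS.
Proof.
move=> rf ha; apply/negP => /submxP [D hD].
have h' : a *m E + (0 : 'rV_m2) *m F = 0 *m E + D *m F by rewrite !mul0mx addr0 add0r.
have [ea _] := rf_uniq rf h'.
by rewrite ea eqxx in ha.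
Qed.

End Helpers.

Theorem lemma4p16 (K : fieldType) (n : nat) (r vn r' vn' : nat)
    (X Z : 'rV[K]_n -> Prop) (Y : 'M[K]_n) (Xi Theta : 'M[K]_n -> Prop) :
  (exists a : K, a != 0 /\ a != 1) ->
  is_preDSV r vn r' vn' X Z Y Xi Theta ->
  ((forall th, ~ Theta th) <-> (forall xi, Xi xi -> (Y :&: xi == Y)%MS)) /\
  ((forall xi, Xi xi -> (Y :&: xi == Y)%MS) <->
   (exists xi, Xi xi /\ (Y :&: xi == Y)%MS)).
Proof.
move=> _ [r1 [rr' [pX [pZ [[spZ1 spZ2] [spall [[xi1 [xi2 [Hx1 Hx2 nx12]]] [HXi [HTh [S1 S2]]]]]]]]]].
have tubeE : forall xi (E : 'M_(r.*2.+2, n)) (F : 'M_(vn, n)), Xi xi ->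
    row_free (col_mx E F) -> (F == Y :&: xi)%MS ->
    (forall x, XYcap X Y xi x <->
       (x != 0 /\ exists a b, x = a *m E + b *m F /\ hypq a = 0)) ->
    forall a, a != 0 -> hypq a = 0 -> X (a *m E) /\ (a *m E <= xi)%MS.
  move=> xi E F Hxi rf eF hC a a0 ha.
  have [_ _ Xch] := HXi xi Hxi.
  have C1 : XYcap X Y xi (a *m E).
    apply/hC; split.
      by exact: rf_neq0' rf a0.
    by exists a, 0; rewrite mul0mx addr0.
  apply/Xch; split => //; apply/negP => h.
  have := rf_notF rf a0; rewrite (submx_trans h) //.
  by case/andP: eF.
have XnotY : forall xi x, Xi xi -> X x -> (x <= xi)%MS -> ~~ (x <= Y)%MS.
  move=> xi x Hxi Xx xx; have [_ _ Xch] := HXi xi Hxi.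
  have [_ /negP h] := (proj1 (Xch x)) (conj Xx xx).
  by apply/negP => xY; apply: h; rewrite sub_capmx xY xx.
have rankV : forall xi, Xi xi -> \rank (Y :&: xi)%MS = vn.
  move=> xi Hxi; have [rk [E [F [rf eS eF hC]]] _] := HXi xi Hxi.
  have /eqmxP eF' := eF; rewrite -eF'.
  have h1 := (mxrank_adds_leqif E F).1.
  rewrite addsmxE (eqP rf) in h1.
  have h2 := rank_leq_row E; have h3 := rank_leq_row F.
  lia.
have ii_iii : (forall xi, Xi xi -> (Y :&: xi == Y)%MS) <->
   (exists xi, Xi xi /\ (Y :&: xi == Y)%MS).
  split; first by move=> H; exists xi1; split => //; exact: H.
  move=> [xi0 [H0 e0]] xi Hxi.
  have rkY : \rank Y = vn.
    have /eqmxP e0' := e0; by rewrite -(rankV xi0 H0) e0'.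
  have le := capmxSl Y xi.
  by rewrite -(mxrank_leqif_eq le).2 rankV // rkY.
have tubeXi : forall xi, Xi xi -> exists x, X x /\ (x <= xi)%MS.
  move=> xi Hxi; have [_ [E [F [rf eS eF hC]]] _] := HXi xi Hxi.
  exists (ek K r 0 *m E).
  exact: tubeE xi E F Hxi rf eF hC _ (@ek_neq0 K r 0 isT) (ek_hyp0' _ _).
have Claim1 : forall th xi p, Theta th -> Xi xi -> (Y <= xi)%MS -> X p ->
    (p <= th)%MS -> (p <= xi)%MS -> False.
  move=> th xi p Hth Hxi Yxi Xp pth pxi.
  have [_ [Vth [_ [gen1 gen2] _ Xcth]]] := HTh th Hth.
  case: (boolP (xi == th)%MS) => eq.
    have [_ [E [F [rf eS eF hC]]] _] := HXi xi Hxi.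
    pose p0 := ek K r 0 *m E.
    have [Xp0 p0xi] : X p0 /\ (p0 <= xi)%MS :=
      tubeE xi E F Hxi rf eF hC _ (@ek_neq0 K r 0 isT) (ek_hyp0' _ _).
    have YF : (Y <= F)%MS.
      apply: submx_trans (proj2 (andP eF)).
      by rewrite sub_capmx submx_refl.
    have sub : ((Y + p0)%MS <= Y :&: th)%MS.
      apply: gen2; first by rewrite (submx_trans (capmxSl _ _)) ?addsmxSl.
      move=> x [x0 xS].
      case/sub_addsmxP: xS => [[u v]] /= ex; subst x.
      have : (u *m Y <= F)%MS by exact: submx_trans (submxMl u Y) YF.
      case/submxP => D hD.
      have : XYcap X Y xi (u *m Y + v *m p0).
        apply/hC; split => //.
        exists ((v 0 0) *: ek K r 0), D; split; last exact: ek_hyp0.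
        have -> : v *m p0 = ((v 0 0) *: ek K r 0) *m E.
          by rewrite /p0 mulmxA {1}(mx11_scalar v) mul_scalar_mx.
        by rewrite hD addrC.
      case=> hX hxi; split => //.
      exact: submx_trans hxi (proj1 (andP eq)).
    have : (p0 <= Y)%MS.
      exact: submx_trans (addsmxSr Y p0) (submx_trans sub (capmxSl _ _)).
    by rewrite (negbTE (XnotY xi p0 Hxi Xp0 p0xi)).
  have sing := S2 xi th (or_introl Hxi) (or_intror Hth) eq.
  have sub : ((xi :&: th)%MS <= Y :&: th)%MS.
    apply: gen2.
      rewrite sub_capmx capmxSr andbT.
      exact: submx_trans (capmxSl _ _) Yxi.
    move=> x [x0 xS].
    have xth : (x <= th)%MS := submx_trans xS (capmxSr _ _).
    have [hx|hx] := sing x (conj x0 xS).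
      by split => //; left.
    by split => //; right.
  have : (p <= Y)%MS.
    apply: submx_trans _ (capmxSl Y th); apply: submx_trans _ sub.
    by rewrite sub_capmx pxi pth.
  by rewrite (negbTE (XnotY xi p Hxi Xp pxi)).
have tubeTh : forall th, Theta th -> exists x, X x /\ (x <= th)%MS.
  move=> th Hth; have [_ [Vth [[E [F [rf eS eF hC]]] [gen1 _] _ Xcth]]] := HTh th Hth.
  have cone_a : forall a : 'rV_(r'.*2.+2), a != 0 -> hypq a = 0 ->
      XYcap X Y th (a *m E).
    move=> a a0 ha; apply/hC; split.
      by exact: rf_neq0' rf a0.
    by exists a, 0; rewrite mul0mx addr0.
  have c0 := cone_a _ (@ek_neq0 K r' 0 isT) (ek_hyp0' _ _).
  have c1 := cone_a _ (@ek_neq0 K r' 1 isT) (ek_hyp1 _ _).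
  case: (boolP (ek K r' 0 *m E <= Y :&: th)%MS) => h0; last first.
    by exists (ek K r' 0 *m E); apply/Xcth; split.
  case: (boolP (ek K r' 1 *m E <= Y :&: th)%MS) => h1; last first.
    by exists (ek K r' 1 *m E); apply/Xcth; split.
  exfalso.
  have s0 : pts (Y :&: th)%MS ((ek K r' 0 + ek K r' 1) *m E).
    split; last by rewrite mulmxDl addmx_sub.
    by exact: rf_neq0' rf (ek01_neq0 _ _).
  have := gen1 _ s0; case/hC => _ [a [b [eab ha]]].
  have e2 : (ek K r' 0 + ek K r' 1) *m E + (0 : 'rV_vn') *m F = a *m E + b *m F.
    by rewrite mul0mx addr0.
  have [ea _] := rf_uniq rf e2.
  by move: ha; rewrite -ea ek_hyp01; move/eqP; rewrite oner_eq0.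
have ii_i : (forall xi, Xi xi -> (Y :&: xi == Y)%MS) -> forall th, ~ Theta th.
  move=> H th Hth.
  have Ysub : forall xi, Xi xi -> (Y <= xi)%MS.
    by move=> xi /H /andP [_ h]; exact: submx_trans h (capmxSr _ _).
  have [x [Xx xth]] := tubeTh th Hth.
  have [y [Xy yxi]] := tubeXi xi1 Hx1.
  case: (boolP (x == y)%MS) => exy.
    apply: (Claim1 th xi1 x) => //; first exact: Ysub.
    exact: submx_trans (proj1 (andP exy)) yxi.
  have [S [[HS|HS] [xS yS]]] := S1 x y (or_introl Xx) (or_introl Xy) exy.
    exact: (Claim1 th S x Hth HS (Ysub S HS)).
  exact: (Claim1 S xi1 y HS Hx1 (Ysub _ Hx1)).
have i_ii : (forall th, ~ Theta th) -> forall xi, Xi xi -> (Y :&: xi == Y)%MS.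
  move=> H xi Hxi.
  suff Yxi : (Y <= xi)%MS.
    by apply/andP; split; [exact: capmxSl | rewrite sub_capmx submx_refl].
  apply: spZ2 => z Zz.
  case: (boolP (z <= xi)%MS) => // nz; exfalso.
  have [_ [E [F [rf eS eF hC]]] _] := HXi xi Hxi.
  pose x := ek K r 0 *m E.
  pose x' := ek K r 1 *m E.
  have [Xx xxi] : X x /\ (x <= xi)%MS :=
    tubeE xi E F Hxi rf eF hC _ (@ek_neq0 K r 0 isT) (ek_hyp0' _ _).
  have [Xx' x'xi] : X x' /\ (x' <= xi)%MS :=
    tubeE xi E F Hxi rf eF hC _ (@ek_neq0 K r 1 isT) (ek_hyp1 _ _).
  have zY : (z <= Y)%MS := spZ1 z Zz.
  have pair : forall w, X w -> (w <= xi)%MS ->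
      exists xi3, [/\ Xi xi3, (w <= xi3)%MS & (z <= xi3)%MS].
    move=> w Xw wxi; case: (boolP (w == z)%MS) => ewz.
      by rewrite (submx_trans (proj2 (andP ewz)) wxi) in nz.
    have [S [[HS|HS] [wS zS]]] := S1 w z (or_introl Xw) (or_intror Zz) ewz.
      by exists S.
    by case: (H S).
  have shift : forall xi3 w c, Xi xi3 -> X w -> (w <= xi3)%MS ->
      (c <= Y :&: xi3)%MS -> ~~ (w <= Y)%MS -> X (w + c).
    move=> xi3 w c H1 Xw wx1 cY nwY.
    have [_ [E1 [F1 [rf1 eS1 eF1 hC1]]] _] := HXi xi3 H1.
    have : XYcap X Y xi3 w by split => //; left.
    case/hC1 => _ [a [b [ew ha]]].
    have : (c <= F1)%MS by exact: submx_trans cY (proj2 (andP eF1)).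
    case/submxP => D eD.
    have cY' : (c <= Y)%MS := submx_trans cY (capmxSl _ _).
    have nY : ~~ ((w + c)%R <= Y)%MS.
      apply/negP => h.
      have : ((w + c - c)%R <= Y)%MS.
        apply: addmx_sub; first exact: h.
        by rewrite eqmx_opp.
      by rewrite addrK (negbTE nwY).
    have : XYcap X Y xi3 (w + c).
      apply/hC1; split.
        by apply/negP => /eqP h0; rewrite h0 sub0mx in nY.
      by exists a, (b + D); rewrite ew eD mulmxDl addrA.
    by case=> [[hX|[_ h]] _] //; rewrite h in nY.
  have [xa [Ha xa1 za]] := pair x Xx xxi.
  have [xb [Hb xb1 zb]] := pair x' Xx' x'xi.
  have pz : (z <= Y :&: xa)%MS by rewrite sub_capmx zY za.
  have Xp := shift xa x z Ha Xx xa1 pz (XnotY xi x Hxi Xx xxi).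
  have mz : (- z <= Y :&: xb)%MS by rewrite eqmx_opp sub_capmx zY zb.
  have Xq := shift xb x' (- z) Hb Xx' xb1 mz
     (XnotY xi x' Hxi Xx' x'xi).
  pose p := x + z.
  pose q := x' + - z.
  have key : forall S, (Xi S \/ Theta S) -> (p <= S)%MS -> (q <= S)%MS -> False.
    move=> S HS pS qS.
    have s_eq : p + q = (ek K r 0 + ek K r 1) *m E.
      by rewrite /p /q addrACA subrr addr0 mulmxDl.
    have sS : ((p + q)%R <= S)%MS := addmx_sub pS qS.
    have sxi : ((p + q)%R <= xi)%MS by rewrite s_eq mulmxDl addmx_sub.
    case: (boolP (S == xi)%MS) => eS'.
      have : ((p - x)%R <= xi)%MS.
        apply: addmx_sub; first exact: submx_trans pS (proj1 (andP eS')).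
        by rewrite eqmx_opp.
      by rewrite /p addrAC subrr add0r (negbTE nz).
    have sing := S2 S xi HS (or_introl Hxi) eS'.
    have s0 : p + q != 0.
      by rewrite s_eq; exact: rf_neq0' rf (ek01_neq0 _ _).
    have hs : XYcap X Y xi (p + q).
      have sc : ((p + q)%R <= S :&: xi)%MS by rewrite sub_capmx sS sxi.
      have [h|h] := sing _ (conj s0 sc).
        by split => //; left.
      by split => //; right; split.
    case/hC: hs => _ [a [b [ea ha]]].
    rewrite s_eq in ea.
    have e2 : (ek K r 0 + ek K r 1) *m E + (0 : 'rV_vn) *m F = a *m E + b *m F.
      by rewrite mul0mx addr0.
    have [ea' _] := rf_uniq rf e2.
    by move: ha; rewrite -ea' ek_hyp01; move/eqP; rewrite oner_eq0.
  case: (boolP (p == q)%MS) => epq.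
    apply: (key xa (or_introl Ha)); first by rewrite /p addmx_sub.
    exact: submx_trans (proj2 (andP epq)) (addmx_sub xa1 za).
  have [S [HS [pS qS]]] := S1 p q (or_introl Xp) (or_introl Xq) epq.
  exact: key S HS pS qS.
split; last exact: ii_iii.
by split; [exact: i_ii | exact: ii_i].
Qed.
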